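(* Let $X$ be a cubic vertex-transitive graph for which $1$ is a simple eigenvalue, with $\pm1$ eigenvector $\mathbf{z}$ for $1$, $V^+=\{x\mid\mathbf{z}(x)=1\}$, $V^-=\{x\mid\mathbf{z}(x)=-1\}$, where $X[V^+]$ is a disjoint union of cycles $C_1,\dots,C_m$ and $X[V^-]$ a disjoint union of cycles $D_1,\dots,D_m$, all of length $k$. Let $\Gamma\le\mathrm{Aut}(X)$ act transitively on $V(X)$, and assume (A1): the stabilizer of $C_1$ in $\Gamma$ acts regularly on the vertex set of $C_1$. Write $C_1=v_1v_2\cdots v_k$ and let $D_1=w_1w_2\cdots w_k$ be the cycle of $X[V^-]$ with $v_1w_1\in E(X)$; let $\gamma_1\in\Gamma$ satisfy $\gamma_1(v_j)=v_{j+1}$ for all $j$ (indices mod $k$) and let $\delta_1\in\Gamma$ satisfy $\delta_1(v_j)=w_j$ for all $j$ (the labelling of $D_1$ being chosen so that such $\delta_1$ exists). Then $\Gamma$ acts regularly on $V(X)$, and hence $X$ is a Cayley graph of the group generated by $\gamma_1$ and the involution $\delta_1$.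
   Context: A group acts regularly on a set if it acts transitively and only the identity fixes a point. $X[W]$ denotes the induced subgraph on $W$. Eigenvalues are those of the adjacency matrix; simple means the eigenspace is $1$-dimensional. *)

(* Defs.v *)
From HB Require Import structures.
From mathcomp Require Import all_boot all_order all_algebra all_fingroup all_field.
Set Implicit Arguments. Unset Strict Implicit. Unset Printing Implicit Defensive.
Import GRing.Theory Num.Theory.

Local Open Scope ring_scope.

Section Graphs.
Variable T : finType.

Definition simple_graph (e : rel T) := symmetric e /\ irreflexive e.

Definition cubic (e : rel T) := forall x : T, #|[set y | e x y]| = 3%N.

Definition is_aut (e : rel T) (g : {perm T}) := forall x y, e (g x) (g y) = e x y.

Definition vertex_transitive (e : rel T) :=
  forall x y : T, exists g : {perm T}, is_aut e g /\ g x = y.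

Definition adjmx (e : rel T) : 'M[algC]_#|T| :=
  \matrix_(i, j) (e (enum_val i) (enum_val j))%:R.

Definition vecof (z : T -> algC) : 'rV[algC]_#|T| := \row_i z (enum_val i).

(* c : 'I_k -> T is a k-cycle c_0 c_1 ... c_{k-1} which is an induced
   subgraph of X[W] (no chords). *)
Definition induced_cycle (e : rel T) (W : {set T}) (k : nat) (c : 'I_k -> T) :=
  [/\ (3 <= k)%N, injective c, (forall i, c i \in W) &
      forall i j, e (c i) (c j) = (j == ordS i) || (i == ordS j)].

Definition cycle_decomposition (e : rel T) (W : {set T}) (m k : nat)
    (C : 'I_m -> 'I_k -> T) :=
  [/\ forall a, induced_cycle e W (C a),
      forall x, x \in W -> exists a, exists i, C a i = x,
      forall a b i j, C a i = C b j -> a = b &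
      forall a b i j, a != b -> ~~ e (C a i) (C b j)].

Definition acts_regularly (G : {set {perm T}}) (S : {set T}) :=
  [transitive G, on S | 'P] /\ forall g x, g \in G -> x \in S -> g x = x -> g = 1%g.

(* X is (isomorphic to) a Cayley graph Cay(H, S): vertices are the elements
   of H, and g ~ h iff g^-1 h \in S, with S = S^-1 and 1 \notin S. *)
Definition cayley_graph_of (gT : finGroupType) (H : {set gT}) (e : rel T) :=
  exists (f : gT -> T) (S : {set gT}),
    [/\ {in H &, injective f}, f @: H = [set: T],
        [/\ S \subset H, (1%g \notin S) & [set (s^-1)%g | s in S] = S] &
        {in H &, forall g h, e (f g) (f h) = ((g^-1 * h)%g \in S)}].

End Graphs.

(* Main.v *)
Require Import Defs.
From HB Require Import structures.
From mathcomp Require Import all_boot all_order all_algebra all_fingroup all_field.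
From mathcomp Require Import zify.
Import GRing.Theory Num.Theory.

Lemma modS1 (m d : nat) : (m %% d).+1 %% d = m.+1 %% d.
Proof. by rewrite -[(m %% d).+1]addn1 modnDml addn1. Qed.

Lemma ordSS_neq (k : nat) (i : 'I_k) : 2 < k -> ordS (ordS i) != i.
Proof.
move=> Hk; apply/eqP => /(congr1 val) /=.
rewrite modS1 -addn2.
have Hi := ltn_ord i.
case: (ltnP (i + 2) k) => H.
  by rewrite modn_small //; lia.
have -> : (i + 2 = (i + 2 - k) + k)%N by lia.
rewrite modnDr modn_small; lia.
Qed.

Lemma ordS_pred_neq (k : nat) (i : 'I_k) : 2 < k -> ordS i != ord_pred i.
Proof.
move=> Hk; apply/eqP => E.
have := ordSS_neq _ i Hk; rewrite E ord_predK eqxx //.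
Qed.

Lemma iter_ordS_val (k : nat) (i : 'I_k) n : val (iter n (@ordS k) i) = ((i + n) %% k)%N.
Proof.
elim: n => [|n IH] /=; first by rewrite addn0 modn_small.
by rewrite IH modS1 addnS.
Qed.

Lemma iter_ordS_surj (k : nat) (i j : 'I_k) : exists n, iter n (@ordS k) i = j.
Proof.
exists (j + k - i)%N; apply: val_inj; rewrite iter_ordS_val.
have Hi := ltn_ord i; have Hj := ltn_ord j.
have -> : (i + (j + k - i) = j + k)%N by lia.
by rewrite modnDr modn_small.
Qed.

Local Open Scope ring_scope.

Lemma vecA (T : finType) (e : rel T) (w : T -> algC) (i : 'I_#|T|) :
  (vecof w *m adjmx e) 0 i = \sum_x w x * (e x (enum_val i))%:R.
Proof.
rewrite !mxE (big_enum_val (fun x => w x * (e x (enum_val i))%:R)) /=.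
by apply: eq_bigr => j _; rewrite !mxE.
Qed.

Lemma eigP (T : finType) (e : rel T) (w : T -> algC) :
  (forall y, \sum_x w x * (e x y)%:R = w y) ->
  (vecof w <= eigenspace (adjmx e) 1)%MS.
Proof.
move=> H; apply/eigenspaceP; rewrite scale1r; apply/rowP => i.
by rewrite vecA H mxE.
Qed.

Lemma eigP2 (T : finType) (e : rel T) (w : T -> algC) :
  (vecof w <= eigenspace (adjmx e) 1)%MS ->
  (forall y, \sum_x w x * (e x y)%:R = w y).
Proof.
move/eigenspaceP; rewrite scale1r => H y.
move/rowP: H => /(_ (enum_rank y)).
by rewrite vecA mxE enum_rankK.
Qed.

Lemma rank1_mult (T : finType) (e : rel T) (u v : T -> algC) (x0 : T) :
  \rank (eigenspace (adjmx e) 1) = 1%N ->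
  (vecof u <= eigenspace (adjmx e) 1)%MS ->
  (vecof v <= eigenspace (adjmx e) 1)%MS -> u x0 != 0 ->
  exists c, forall x, v x = c * u x.
Proof.
move=> Hr Hu Hv Hx0.
have nz : vecof u != 0.
  apply/eqP => /rowP /(_ (enum_rank x0)); rewrite !mxE enum_rankK => E.
  by rewrite E eqxx in Hx0.
have Hsub : (eigenspace (adjmx e) 1 <= vecof u)%MS by rewrite -(mxrank_leqif_sup Hu).2 Hr rank_rV nz.
have : (vecof v <= vecof u)%MS by apply: submx_trans Hv Hsub.
case/sub_rVP => c Hc; exists c => x.
move/rowP: Hc => /(_ (enum_rank x)).
by rewrite !mxE enum_rankK.
Qed.

Lemma aut_eig (T : finType) (e : rel T) (w : T -> algC) (g : {perm T}) :
  is_aut e g -> (vecof w <= eigenspace (adjmx e) 1)%MS ->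
  (vecof (fun x => w (g x)) <= eigenspace (adjmx e) 1)%MS.
Proof.
move=> Ha Hw; apply: eigP => y.
rewrite -(@eigP2 _ _ _ Hw (g y)) [RHS](reindex_inj (@perm_inj _ g)) /=.
by apply: eq_bigr => x _; rewrite Ha.
Qed.

Lemma three_elems (T : finType) (A : {set T}) a b c x :
  #|A| = 3%N -> a \in A -> b \in A -> c \in A -> a != b -> a != c -> b != c ->
  x \in A -> [|| x == a, x == b | x == c].
Proof.
move=> HA Ha Hb Hc ab ac bc Hx.
have S : [set a; b; c] \subset A.
  by apply/subsetP => y; rewrite !inE; case/orP => [/orP[]|]/eqP->.
have C3 : #|[set a; b; c]| = 3%N.
  by rewrite setUC cardsU1 cards2 !inE ab negb_or eq_sym ac eq_sym bc.
have E : [set a; b; c] = A by apply/eqP; rewrite eqEcard S HA C3.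
by move: Hx; rewrite -E !inE -orbA.
Qed.

Local Close Scope ring_scope.

Theorem theorem5p1 (T : finType) (e : rel T)
  (Hsimple : simple_graph e) (Hcubic : cubic e) (Hvt : vertex_transitive e)
  (Hsimp1 : \rank (eigenspace (adjmx e) 1%R) = 1%N)
  (z : T -> algC) (Hzpm : forall x, z x = 1%R \/ z x = (-1)%R)
  (Hz : (vecof z <= eigenspace (adjmx e) 1%R)%MS)
  (m k : nat) (C D : 'I_m -> 'I_k -> T)
  (HC : cycle_decomposition e [set x | z x == 1%R] C)
  (HD : cycle_decomposition e [set x | z x == (-1)%R] D)
  (Gamma : {group {perm T}})
  (HGaut : forall g, g \in Gamma -> is_aut e g)
  (HGtr : [transitive Gamma, on [set: T] | 'P])
  (a1 b1 : 'I_m) (i1 : 'I_k)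
  (HA1 : acts_regularly
     [set g in Gamma | g @: [set C a1 i | i : 'I_k] == [set C a1 i | i : 'I_k]]
                        [set C a1 i | i : 'I_k])
  (Hv1w1 : e (C a1 i1) (D b1 i1))
  (gamma1 delta1 : {perm T})
  (Hg1 : gamma1 \in Gamma) (Hg1v : forall j, gamma1 (C a1 j) = C a1 (ordS j))
  (Hd1 : delta1 \in Gamma) (Hd1v : forall j, delta1 (C a1 j) = D b1 j) :
  acts_regularly Gamma [set: T] /\
  (delta1 ^+ 2 = 1 /\ delta1 != 1)%g /\
  cayley_graph_of <<[set gamma1; delta1]>>%g e.

Proof.
have [HCcyc HCcov HCsame HCne] := HC.
have [HDcyc HDcov HDsame HDne] := HD.
have [k3 HCinj HCin HCe] := HCcyc a1.
have [_ HDinj HDin HDe] := HDcyc b1.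
have one_neq : (1%R : algC) != (-1)%R by rewrite -addr_eq0 -mulr2n pnatr_eq0.
have zC : forall a i, z (C a i) = 1%R.
  by move=> a i; have [_ _ H _] := HCcyc a; move: (H i); rewrite inE => /eqP.
have zD : forall a i, z (D a i) = (-1)%R.
  by move=> a i; have [_ _ H _] := HDcyc a; move: (H i); rewrite inE => /eqP.
have CneD : forall a b i j, C a i != D b j.
  move=> a b i j; apply/eqP => E; have := zC a i; rewrite E zD => /eqP.
  by rewrite eq_sym (negbTE one_neq).
have stabC : forall g, g \in Gamma -> forall i0, g (C a1 i0) = C a1 i0 -> g = 1%g.
  move=> g Hg i0 Hfix.
  have zg : forall x, z (g x) = z x.
    have nz : z (C a1 i0) != 0%R by rewrite zC oner_neq0.
    have [c Hc] := rank1_mult _ e z (fun x => z (g x)) (C a1 i0) Hsimp1 Hz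
       (aut_eig _ _ _ _ (HGaut g Hg) Hz) nz.
    have c1 : c = 1%R by move: (Hc (C a1 i0)); rewrite Hfix zC mulr1.
    by move=> x; rewrite Hc c1 mul1r.
  have step : forall i, g (C a1 i) \in [set C a1 i | i : 'I_k] ->
                        g (C a1 (ordS i)) \in [set C a1 i | i : 'I_k].
    move=> i /imsetP [j _ Ej].
    have Hin : g (C a1 (ordS i)) \in [set x | z x == 1%R] by rewrite inE zg zC.
    have [b [l Ebl]] := HCcov _ Hin.
    have Hedge : e (C a1 j) (C b l) by rewrite Ebl -Ej HGaut // HCe eqxx.
    case: (eqVneq a1 b) => [Eab|Nab]; last by rewrite (negbTE (HCne _ _ j l Nab)) in Hedge.
    by rewrite -Ebl -Eab imset_f.
  have all_in : forall i, g (C a1 i) \in [set C a1 i | i : 'I_k].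
    move=> i; have [n <-] := iter_ordS_surj _ i0 i.
    elim: n => [|n IH] /=; first by rewrite Hfix imset_f.
    exact: step.
  have Hstab : g \in [set g in Gamma | g @: [set C a1 i | i : 'I_k] == [set C a1 i | i : 'I_k]].
    rewrite inE Hg eqEcard card_imset ?leqnn ?andbT; last exact: perm_inj.
    by apply/subsetP => y /imsetP [x /imsetP [i _ ->] ->]; exact: all_in.
  by apply: (HA1.2 g (C a1 i0) Hstab _ Hfix); rewrite imset_f.
have regP : forall g x, g \in Gamma -> g x = x -> g = 1%g.
  move=> g x Hg Hx.
  have Horb := atransP HGtr (C a1 i1) (in_setT _).
  have : x \in orbit 'P Gamma (C a1 i1) by rewrite Horb in_setT.
  case/orbitP => h Hh; rewrite /= apermE => Ehx.
  have Hc : (h * g * h^-1)%g = 1%g.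
    apply: (stabC _ _ i1); first by rewrite !groupM ?groupV.
    by rewrite !permM Ehx Hx -Ehx permK.
  have : (h * g = h)%g by rewrite -(mulgKV h (h * g)%g) Hc mul1g.
  by rewrite -{2}(mulg1 h) => /mulgI.
split; first by split; [exact: HGtr | move=> g x Hg _; exact: regP].
have Hsym := Hsimple.1.
have Hirr := Hsimple.2.
have e_vvS : e (C a1 i1) (C a1 (ordS i1)) by rewrite HCe eqxx.
have e_vvP : e (C a1 i1) (C a1 (ord_pred i1)) by rewrite HCe ord_predK eqxx orbT.
have e_wwS : e (D b1 i1) (D b1 (ordS i1)) by rewrite HDe eqxx.
have e_wwP : e (D b1 i1) (D b1 (ord_pred i1)) by rewrite HDe ord_predK eqxx orbT.
have e_wv : e (D b1 i1) (C a1 i1) by rewrite Hsym.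
have NV : forall y, e (C a1 i1) y ->
    [|| y == C a1 (ordS i1), y == C a1 (ord_pred i1) | y == D b1 i1].
  move=> y Hy; apply: (three_elems _ [set y | e (C a1 i1) y] _ _ _ _ (Hcubic (C a1 i1))).
  - by rewrite inE.
  - by rewrite inE.
  - by rewrite inE.
  - by rewrite (inj_eq HCinj) ordS_pred_neq.
  - exact: CneD.
  - exact: CneD.
  - by rewrite inE.
have NW : forall y, e (D b1 i1) y ->
    [|| y == D b1 (ordS i1), y == D b1 (ord_pred i1) | y == C a1 i1].
  move=> y Hy; apply: (three_elems _ [set y | e (D b1 i1) y] _ _ _ _ (Hcubic (D b1 i1))).
  - by rewrite inE.
  - by rewrite inE.
  - by rewrite inE.
  - by rewrite (inj_eq HDinj) ordS_pred_neq.
  - by rewrite eq_sym CneD.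
  - by rewrite eq_sym CneD.
  - by rewrite inE.
have Hdw : delta1 (D b1 i1) = C a1 i1.
  have Hew := HGaut _ Hd1 (C a1 i1) (D b1 i1); rewrite Hd1v Hv1w1 in Hew.
  case/or3P: (NW _ Hew) => /eqP E //.
    move: E; rewrite -(Hd1v (ordS i1)) => /perm_inj E.
    by move: (CneD a1 b1 (ordS i1) i1); rewrite E eqxx.
  move: E; rewrite -(Hd1v (ord_pred i1)) => /perm_inj E.
  by move: (CneD a1 b1 (ord_pred i1) i1); rewrite E eqxx.
have Hd2 : (delta1 ^+ 2 = 1)%g.
  apply: (regP _ (C a1 i1)); first exact: groupX.
  by rewrite expgS expg1 permM Hd1v Hdw.
have Hd1n : (delta1 != 1)%g.
  apply/eqP => E; move: (Hd1v i1); rewrite E perm1 => E'.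
  by move: (CneD a1 b1 i1 i1); rewrite -E' eqxx.
split; first by split.
pose H := (<<[set gamma1; delta1]>>)%g.
have HsubG : H \subset Gamma.
  by rewrite gen_subG; apply/subsetP => x; rewrite !inE => /orP[]/eqP->.
have inH : forall h, h \in H -> h \in Gamma by move=> h; apply: (subsetP HsubG).
have g1H : gamma1 \in H by apply: mem_gen; rewrite !inE eqxx.
have d1H : delta1 \in H by apply: mem_gen; rewrite !inE eqxx orbT.
pose S := [set gamma1; gamma1^-1; delta1]%g.
have Hg1inv : gamma1^-1%g (C a1 i1) = C a1 (ord_pred i1).
  by rewrite -{1}(ord_predK i1) -Hg1v permK.
have Hdinv : (delta1^-1 = delta1)%g.
  by rewrite -[LHS]mulg1 -Hd2 expgS expg1 mulKg.
have SinH : S \subset H.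
  by apply/subsetP => x; rewrite !inE => /orP[/orP[]|]/eqP->; rewrite ?groupV.
have NvS : forall y, e (C a1 i1) y -> exists2 s, s \in S & y = s (C a1 i1).
  move=> y Hy; case/or3P: (NV _ Hy) => /eqP->.
  - by exists gamma1; rewrite ?Hg1v // !inE eqxx.
  - by exists gamma1^-1%g; rewrite ?Hg1inv // !inE eqxx orbT.
  - by exists delta1; rewrite ?Hd1v // !inE eqxx orbT.
have Sv : forall s, s \in S -> e (C a1 i1) (s (C a1 i1)).
  by move=> s; rewrite !inE => /orP[/orP[]|]/eqP->; rewrite ?Hg1v ?Hg1inv ?Hd1v.
have Ssym : forall s, s \in S -> (s^-1 \in S)%g.
  move=> s; rewrite !inE => /orP[/orP[]|]/eqP->; rewrite ?invgK ?Hdinv eqxx ?orbT //.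
have injH : forall g h, g \in H -> h \in H -> g (C a1 i1) = h (C a1 i1) -> g = h.
  move=> g h Hg Hh E.
  have E1 : (g * h^-1)%g = 1%g.
    apply: (regP _ (C a1 i1)); first by rewrite groupM ?groupV ?inH.
    by rewrite permM E permK.
  by rewrite -(mulgKV h g) E1 mul1g.
have clo : forall h y, h \in H -> e (h (C a1 i1)) y ->
    exists2 h', h' \in H & y = h' (C a1 i1).
  move=> h y Hh Hey.
  have E' := HGaut _ (inH _ Hh) (C a1 i1) (h^-1%g y); rewrite permKV in E'.
  rewrite E' in Hey; have [s Hs Es] := NvS _ Hey.
  exists (s * h)%g; first by rewrite groupM // (subsetP SinH).
  by rewrite permM -Es permKV.
pose O := [set (h : {perm T}) (C a1 i1) | h in H].
have O_clo : forall x y, x \in O -> e x y -> y \in O.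
  move=> x y /imsetP [h Hh ->] Hey; have [h' Hh' ->] := clo _ _ Hh Hey.
  exact: imset_f.
have vO : C a1 i1 \in O by apply/imsetP; exists 1%g; rewrite ?group1 ?perm1.
pose zO := fun x => if x \in O then z x else 0%R.
have HzO : (vecof zO <= eigenspace (adjmx e) 1%R)%MS.
  apply: eigP => y; case: (boolP (y \in O)) => Hy.
    rewrite /zO Hy -(eigP2 _ _ _ Hz y); apply: eq_bigr => x _.
    case: (boolP (x \in O)) => Hx //; case Exy: (e x y); last by rewrite !mulr0.
    by rewrite Hsym in Exy; rewrite (O_clo _ _ Hy Exy) in Hx.
  rewrite /zO (negbTE Hy); apply: big1 => x _.
  case: (boolP (x \in O)) => Hx; last by rewrite mul0r.
  case Exy: (e x y); last by rewrite mulr0.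
  by rewrite (O_clo _ _ Hx Exy) in Hy.
have Ofull : forall x, x \in O.
  have nz : z (C a1 i1) != 0%R by rewrite zC oner_neq0.
  have [c Hc] := rank1_mult _ e z zO (C a1 i1) Hsimp1 Hz HzO nz.
  have c1 : c = 1%R by move: (Hc (C a1 i1)); rewrite /zO vO zC mulr1.
  move=> x; case: (boolP (x \in O)) => // Hx.
  move: (Hc x); rewrite /zO (negbTE Hx) c1 mul1r.
  by case: (Hzpm x) => ->; [move/eqP; rewrite eq_sym oner_eq0 | move/eqP; rewrite eq_sym oppr_eq0 oner_eq0].
have key : forall u, u \in H -> e (C a1 i1) (u (C a1 i1)) = (u \in S).
  move=> u Hu; apply/idP/idP => [Heu | Hu']; last exact: Sv.
  have [s Hs Es] := NvS _ Heu.
  by rewrite (injH _ _ Hu (subsetP SinH _ Hs) Es).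
have g1n : (gamma1 != 1)%g.
  apply/eqP => E; move: (Hg1v i1); rewrite E perm1 => E'.
  by move: e_vvS; rewrite -E' Hirr.
exists (fun h : {perm T} => h^-1%g (C a1 i1)), S; split.
- move=> g h Hg Hh /= E; apply: invg_inj.
  by apply: injH; rewrite ?groupV.
- apply/setP => x; rewrite in_setT.
  have /imsetP [h Hh ->] := Ofull x.
  by apply/imsetP; exists h^-1%g; rewrite ?groupV ?invgK.
- split => //.
    by rewrite !inE !negb_or eq_sym g1n eq_sym invg_eq1 g1n eq_sym Hd1n.
  apply/setP => x; apply/imsetP/idP => [[s Hs ->]|Hx]; first exact: Ssym.
  by exists x^-1%g; [exact: Ssym | rewrite invgK].
- move=> g h Hg Hh /=.
  rewrite -(HGaut _ (inH _ Hg)) permKV -permM key; last by rewrite groupM ?groupV.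
  apply/idP/idP => Hs; have := Ssym _ Hs; by rewrite invMg invgK.
Qed.
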